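(* Let $m\ge2$, $G=CK(2m-1)$, and let $B$ be a blocker for the simple Hamiltonian paths of $G$ whose $m$ edges are parallel (or equal) to the boundary edges $[0,1],\dots,[m-1,m]$, one per direction. Let $[\alpha,\alpha+1]$ and $[m-\delta-1,m-\delta]$ be the first and last edges of $\langle0,1,\dots,m\rangle$ belonging to $B$. Let $e\in B$ be parallel to one of the $\alpha+\delta$ boundary edges $[0,1],\dots,[\alpha-1,\alpha],[m-\delta,m-\delta+1],\dots,[m-1,m]$. Put $A=\langle\alpha,\alpha+1,\dots,m-\delta\rangle$ and $\bar A=\langle m-\delta,\dots,2m-2,0,1,\dots,\alpha\rangle$. Then $e$ connects an internal vertex of $A$ to an internal vertex of $\bar A$.
   Context: $CK(2m-1)$ is the complete convex geometric graph on $2m-1$ points in convex position, labelled clockwise $0,\dots,2m-2$ (elements of $\mathbb{Z}_{2m-1}$), with all segments as edges; boundary edges are $[i,i+1]$. The direction of $[i,j]$ is $i+j\pmod{2m-1}$; edges are parallel if they have the same direction. A simple Hamiltonian path (SHP) is a path through all vertices whose edges pairwise do not cross; a blocker for SHPs is an edge set of smallest possible size sharing an edge with every SHP. *)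

(* Defs.v *)
From mathcomp Require Import all_boot.
Set Implicit Arguments. Unset Strict Implicit. Unset Printing Implicit Defensive.

(* Convex complete geometric graph CK(n) on points 0..n-1 (clockwise) in
   convex position.  Vertices: 'I_n.  An edge (segment) is a 2-element
   subset of 'I_n. *)
Section CK.
Variable n : nat.

Definition is_edge (e : {set 'I_n}) : bool := #|e| == 2.

Definition is_edge_ab (e : {set 'I_n}) (a b : nat) : bool :=
  [forall x : 'I_n, (x \in e) == ((val x == a) || (val x == b))].

Definition dir (e : {set 'I_n}) : nat := (\sum_(i in e) (val i)) %% n.

(* x lies strictly between the two endpoints of e (in the linear order 0..n-1) *)
Definition between (e : {set 'I_n}) (x : 'I_n) : bool :=
  #|[set z in e | val z < val x]| == 1.

(* two segments between points in convex position cross iff their four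
   endpoints are distinct and interleave *)
Definition cross (e f : {set 'I_n}) : bool :=
  [disjoint e & f] &&
  [exists x in f, exists y in f, between e x && ~~ between e y].

Definition path_edges (p : seq 'I_n) : seq {set 'I_n} :=
  match p with
  | [::] => [::]
  | x :: q => pairmap (fun a b => [set a; b]) x q
  end.

Definition is_SHP (p : seq 'I_n) : bool :=
  [&& size p == n, uniq p &
      all (fun e => all (fun f => ~~ cross e f) (path_edges p)) (path_edges p)].

Definition blocks (B : {set {set 'I_n}}) : Prop :=
  forall p : seq 'I_n, is_SHP p -> has (fun e => e \in B) (path_edges p).

Definition is_blocker (B : {set {set 'I_n}}) : Prop :=
  [/\ (forall e, e \in B -> is_edge e),
      blocks B &
      forall B' : {set {set 'I_n}},
        (forall e, e \in B' -> is_edge e) -> blocks B' -> #|B| <= #|B'|].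

End CK.

(* Main.v *)
Require Import Defs.
From mathcomp Require Import all_boot zify.
Set Implicit Arguments. Unset Strict Implicit. Unset Printing Implicit Defensive.

Definition IL (u v x y : nat) : Prop := x <> u /\ x <> v /\ y <> u /\ y <> v /\
  ((u < x < v \/ v < x < u) <-> ~ (u < y < v \/ v < y < u)).
Lemma Isym u v x y : IL u v x y -> IL x y u v.
Proof. rewrite /IL; lia. Qed.

Definition npairs (p : seq nat) : seq (nat * nat) :=
  if p is x :: q then pairmap pair x q else [::].

Fixpoint grow (lo hi : nat) (ds : seq bool) : seq nat :=
  match ds with
  | [::] => [::]
  | true :: ds' => hi.+1 :: grow lo hi.+1 ds'
  | false :: ds' => lo.-1 :: grow lo.-1 hi ds'
  end.

Fixpoint alt (bb : bool) (k : nat) : seq bool :=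
  if k is k'.+1 then bb :: alt (~~ bb) k' else [::].

Lemma size_grow lo hi ds : size (grow lo hi ds) = size ds.
Proof. by elim: ds lo hi => [|[] ds IH] lo hi //=; rewrite IH. Qed.

Lemma grow_range lo hi ds : count negb ds <= lo -> forall z, z \in grow lo hi ds ->
  (lo - count negb ds <= z < lo) \/ (hi < z <= hi + count id ds).
Proof.
elim: ds lo hi => [|[] ds IH] lo hi //= Hc z; rewrite inE => /orP[/eqP ->|/IH H].
- lia.
- have := H Hc; lia.
- lia.
- have : count negb ds <= lo.-1 by lia.
  move=> /H; lia.
Qed.

Lemma grow_uniq lo hi ds : lo <= hi -> count negb ds <= lo -> uniq (grow lo hi ds).
Proof.
elim: ds lo hi => [|[] ds IH] lo hi //= Hlh Hc.
- rewrite IH //; last lia. rewrite andbT; apply/negP => /(grow_range Hc); lia.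
- have Hc' : count negb ds <= lo.-1 by lia.
  rewrite IH //; last lia. rewrite andbT; apply/negP => /(grow_range Hc'); lia.
Qed.

Definition NC (lo hi : nat) (p : seq nat) : Prop :=
  (forall f, f \in npairs p -> forall g1 g2,
     lo <= g1 <= hi -> lo <= g2 <= hi -> ~ IL f.1 f.2 g1 g2) /\
  (forall f g, f \in npairs p -> g \in npairs p -> ~ IL f.1 f.2 g.1 g.2).

Lemma nc_step lo hi lo' hi' cur next rest :
  lo' <= lo -> hi <= hi' -> lo' <= next <= hi' -> lo <= cur <= hi ->
  (forall g1 g2, lo <= g1 <= hi -> lo <= g2 <= hi -> ~ IL cur next g1 g2) ->
  NC lo' hi' (next :: rest) -> NC lo hi (cur :: next :: rest).
Proof.
move=> H1 H2 H3 H4 Hhead [IH1 IH2].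
rewrite /NC /= -/(npairs (next :: rest)).
split.
- move=> f; rewrite inE => /orP[/eqP -> | Hf] g1 g2 G1 G2 /=.
  + exact: Hhead.
  + apply: IH1 => //; lia.
- have Hh : forall g, g \in npairs (next :: rest) ->
     ~ IL cur next g.1 g.2 /\ ~ IL g.1 g.2 cur next.
    move=> g Hg; split; last by apply: IH1; lia.
    by move/Isym; apply: IH1; lia.
  move=> f g; rewrite !inE => /orP[/eqP -> | Hf] /orP[/eqP -> | Hg] /=.
  + rewrite /IL; lia.
  + exact: (Hh g Hg).1.
  + exact: (Hh f Hf).2.
  + exact: IH2.
Qed.

Lemma grow_nc lo hi cur ds : lo <= hi -> (cur = lo \/ cur = hi) -> count negb ds <= lo ->
  NC lo hi (cur :: grow lo hi ds).
Proof.
elim: ds lo hi cur => [|[] ds IH] lo hi cur /= Hlh Hcur Hc.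
- by split.
- apply: (nc_step (lo' := lo) (hi' := hi.+1)); try lia.
  + move=> g1 g2 G1 G2; rewrite /IL; lia.
  + apply: IH; lia.
- apply: (nc_step (lo' := lo.-1) (hi' := hi)); try lia.
  + move=> g1 g2 G1 G2; rewrite /IL; lia.
  + apply: IH; lia.
Qed.

Lemma walk_pairs j lo hi ds : j <= lo -> forall f : nat * nat,
  f \in npairs (lo :: grow lo hi (nseq j false ++ ds)) ->
  (f.2.+1 = f.1 /\ lo - j <= f.2 /\ f.1 <= lo) \/
  f \in npairs ((lo - j) :: grow (lo - j) hi ds).
Proof.
elim: j lo => [|j IH] lo Hj f.
- by rewrite subn0 => Hf; right.
- rewrite /= -/(npairs (lo.-1 :: grow lo.-1 hi (nseq j false ++ ds))) inE.
  case/orP => [/eqP -> | Hf]; first by left => /=; lia.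
  have := IH lo.-1 ltac:(lia) f Hf.
  have -> : lo.-1 - j = lo - j.+1 by lia.
  case=> [[H1 [H2 H3]]|H]; [left; split; [exact: H1|]; split; [exact: H2|]; apply: leq_trans H3 _; lia | by right].
Qed.

Lemma count_alt bb k : count negb (alt bb k) <= k.
Proof. elim: k bb => [|k IH] bb //=; have := IH (~~ bb); lia. Qed.

Lemma zig_pairs k bb lo hi cur : cur = (if bb then lo else hi) ->
  count negb (alt bb k) <= lo -> forall f : nat * nat,
  f \in npairs (cur :: grow lo hi (alt bb k)) ->
  (hi + f.1 < lo + f.2 \/ hi + f.2 < lo + f.1) /\
  (f.1 + f.2 = lo + hi \/ (if bb then f.1 + f.2 = lo + hi + 1 else f.1 + f.2 + 1 = lo + hi)).
Proof.
elim: k bb lo hi cur => [|k IH] bb lo hi cur //= Hcur Hc f.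
case: bb Hcur Hc => /= -> Hc.
- rewrite -/(npairs (hi.+1 :: grow lo hi.+1 (alt false k))) inE.
  case/orP => [/eqP -> /= | Hf]; first by lia.
  have := IH false lo hi.+1 hi.+1 erefl Hc f Hf; lia.
- rewrite -/(npairs (lo.-1 :: grow lo.-1 hi (alt true k))) inE.
  case/orP => [/eqP -> /= | Hf]; first by lia.
  have := IH true lo.-1 hi lo.-1 erefl ltac:(lia) f Hf; lia.
Qed.

Lemma npairs_map (h : nat -> nat) p :
  npairs (map h p) = map (fun f => (h f.1, h f.2)) (npairs p).
Proof. case: p => //= x q; elim: q x => //= y q IH x; by rewrite IH. Qed.

Lemma npairs_mem p f : f \in npairs p -> f.1 \in p /\ f.2 \in p.
Proof.
case: p => //= x q; elim: q x => //= y q IH x; rewrite inE => /orP[/eqP -> | /IH].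
- by rewrite /= !inE !eqxx orbT.
- by rewrite !inE => -[-> ->]; rewrite !orbT.
Qed.

Lemma npairs_neq p f : uniq p -> f \in npairs p -> f.1 <> f.2.
Proof.
case: p => //= x q; elim: q x => //= y q IH x /andP[Hx Hu].
rewrite inE => /orP[/eqP -> | Hf] /=.
- by move=> E; rewrite E inE eqxx in Hx.
- exact: (IH y Hu Hf).
Qed.

Definition Pre (n L : nat) (eps : bool) (p : seq nat) := exists a,
  a + L <= n /\ [/\ size p = n, uniq p, all (fun c => c < n) p,
   (forall f g : nat * nat, f \in npairs p -> g \in npairs p -> ~ IL f.1 f.2 g.1 g.2) &
   (forall f : nat * nat, f \in npairs p ->
     ((f.2.+1 = f.1 \/ f.1.+1 = f.2) /\ a <= f.1 <= a + L - 1 /\ a <= f.2 <= a + L - 1) \/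
     ((f.1 + L <= f.2 \/ f.2 + L <= f.1) /\
      (f.1 + f.2 = 2 * a + L - 1 \/
       (if eps then f.1 + f.2 = 2 * a + L else f.1 + f.2 + 2 = 2 * a + L))))].

Definition cp (n L : nat) : seq nat :=
  let zz := alt true (n - L) in let a := count negb zz in
  (a + L - 1) :: grow (a + L - 1) (a + L - 1) (nseq (L - 1) false ++ zz).

Lemma cp_pre n L : 2 <= L <= n -> Pre n L true (cp n L).
Proof.
move=> HL; rewrite /cp.
set zz := alt true (n - L); set a := count negb zz.
have Ha : a <= n - L by apply: count_alt.
have Hsz : size zz = n - L by rewrite /zz; elim: (n - L) true => //= k IH bb; rewrite IH.
have Hid : count id zz = n - L - a.
  have := count_predC negb zz; rewrite Hsz.
  have -> : count (predC negb) zz = count id zz by apply: eq_count => -[].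
  rewrite -/a; lia.
have Hcn : count negb (nseq (L - 1) false ++ zz) = L - 1 + a.
  by rewrite count_cat count_nseq /= mul1n.
have Hci : count id (nseq (L - 1) false ++ zz) = n - L - a.
  by rewrite count_cat count_nseq /= mul0n.
exists a; split; first lia; split.
- by rewrite /= size_grow size_cat size_nseq Hsz; lia.
- rewrite /= grow_uniq ?andbT; [|lia|lia].
  by apply/negP => /grow_range; rewrite Hcn => /(_ ltac:(lia)); lia.
- apply/allP => z; rewrite inE => /orP[/eqP -> | /grow_range]; first lia.
  by rewrite Hcn Hci => /(_ ltac:(lia)); lia.
- have [_ H] := @grow_nc (a + L - 1) (a + L - 1) (a + L - 1) (nseq (L - 1) false ++ zz)
     (leqnn _) (or_introl erefl) ltac:(lia).
  exact: H.
- move=> f /walk_pairs -/(_ ltac:(lia)) [H|]; first by left; lia.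
  have -> : a + L - 1 - (L - 1) = a by lia.
  move/(zig_pairs (k := n - L) (bb := true) (lo := a) (hi := a + L - 1) erefl (leqnn _)).
  move=> H; right; lia.
Qed.

Lemma inn_refl N u v z : u <= N -> v <= N -> z <= N ->
  ((N - u < N - z < N - v \/ N - v < N - z < N - u) <-> (u < z < v \/ v < z < u)).
Proof. lia. Qed.

Lemma I_refl N u v x y : u <= N -> v <= N -> x <= N -> y <= N ->
  IL (N - u) (N - v) (N - x) (N - y) -> IL u v x y.
Proof.
move=> Hu Hv Hx Hy; rewrite /IL !inn_refl //.
move=> [H1 [H2 [H3 [H4 H5]]]]; split; [lia|split; [lia|split; [lia|split; [lia|exact H5]]]].
Qed.

Lemma pre_refl n L p : 1 <= L -> Pre n L true p -> Pre n L false (map (fun c => n.-1 - c) p).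
Proof.
move=> HL1; case=> a [Ha [Hs Hu Hall Hnc Hed]].
have Hlt : forall c, c \in p -> c < n by move=> c; move/allP: Hall => H /H.
exists (n - L - a); split; first lia; split.
- by rewrite size_map.
- rewrite map_inj_in_uniq // => c1 c2 /Hlt H1 /Hlt H2; lia.
- apply/allP => c /mapP[c' /Hlt H ->]; lia.
- rewrite npairs_map => f g /mapP[[u1 v1] Hf' ->] /mapP[[u2 v2] Hg' ->] /=.
  have [A1 A2] := npairs_mem Hf'; have [B1 B2] := npairs_mem Hg'.
  move: (Hlt _ A1) (Hlt _ A2) (Hlt _ B1) (Hlt _ B2) (Hnc _ _ Hf' Hg') => /= ? ? ? ? H HI.
  apply: H; move: HI; apply: I_refl; lia.
- rewrite npairs_map => f /mapP[[u1 v1] Hf' ->] /=.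
  have [A1 A2] := npairs_mem Hf'.
  move: (Hlt _ A1) (Hlt _ A2) (Hed _ Hf') => /= Hu1 Hv1 [[Hw [H1 H2]] | [Hz Hsum]].
  + left; split; first lia; split; lia.
  + right; split; first lia.
    case: Hsum => Hsum; [left; lia | right; lia].
Qed.

Lemma pre_exists n L (eps : bool) : 2 <= L <= n -> exists p, Pre n L eps p.
Proof.
move=> HL; case: eps; first by exists (cp n L); apply: cp_pre.
by exists (map (fun c => n.-1 - c) (cp n L)); apply: pre_refl; [lia|apply: cp_pre].
Qed.

Section Ord.
Variables (n : nat) (x0 : 'I_n).
Definition toI (c : nat) : 'I_n := insubd x0 c.
Lemma val_toI c : c < n -> (toI c : nat) = c.
Proof. by move=> H; rewrite /toI val_insubd H. Qed.

Lemma between2 (U V z : 'I_n) : U != V -> between [set U; V] z = ((U < z) != (V < z)).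
Proof.
move=> nUV; rewrite /between.
case hU: (U < z); case hV: (V < z) => /=.
- have -> : [set w in [set U; V] | w < z] = [set U; V] by (apply/setP => w; rewrite !inE; case: (eqVneq w U) => [->|wU] /=; [ rewrite ?hU ?hV ?eqxx ?(negbTE nUV) ?(eq_sym V U) ?(negbTE nUV) ?andbF ?orbT // | case: (eqVneq w V) => [->|wV] /=; rewrite ?hU ?hV ?eqxx ?(negbTE wU) ?(negbTE wV) ?(eq_sym V U) ?(negbTE nUV) ?andbF ?orbT //]).
  by rewrite cards2 nUV.
- have -> : [set w in [set U; V] | w < z] = [set U] by (apply/setP => w; rewrite !inE; case: (eqVneq w U) => [->|wU] /=; [ rewrite ?hU ?hV ?eqxx ?(negbTE nUV) ?(eq_sym V U) ?(negbTE nUV) ?andbF ?orbT // | case: (eqVneq w V) => [->|wV] /=; rewrite ?hU ?hV ?eqxx ?(negbTE wU) ?(negbTE wV) ?(eq_sym V U) ?(negbTE nUV) ?andbF ?orbT //]).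
  by rewrite cards1.
- have -> : [set w in [set U; V] | w < z] = [set V] by (apply/setP => w; rewrite !inE; case: (eqVneq w U) => [->|wU] /=; [ rewrite ?hU ?hV ?eqxx ?(negbTE nUV) ?(eq_sym V U) ?(negbTE nUV) ?andbF ?orbT // | case: (eqVneq w V) => [->|wV] /=; rewrite ?hU ?hV ?eqxx ?(negbTE wU) ?(negbTE wV) ?(eq_sym V U) ?(negbTE nUV) ?andbF ?orbT //]).
  by rewrite cards1.
- have -> : [set w in [set U; V] | w < z] = set0 by (apply/setP => w; rewrite !inE; case: (eqVneq w U) => [->|wU] /=; [ rewrite ?hU ?hV ?eqxx ?(negbTE nUV) ?(eq_sym V U) ?(negbTE nUV) ?andbF ?orbT // | case: (eqVneq w V) => [->|wV] /=; rewrite ?hU ?hV ?eqxx ?(negbTE wU) ?(negbTE wV) ?(eq_sym V U) ?(negbTE nUV) ?andbF ?orbT //]).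
  by rewrite cards0.
Qed.

Lemma cross2 (U V X Y : 'I_n) : U != V -> X != Y -> cross [set U; V] [set X; Y] ->
  IL U V X Y.
Proof.
move=> nUV nXY /andP[Hdis /existsP[a /andP[Ha /existsP[b /andP[Hb /andP[Ba Bb]]]]]].
have HX : X \notin [set U; V] by rewrite (disjointFl Hdis) // !inE eqxx.
have HY : Y \notin [set U; V] by rewrite (disjointFl Hdis) // !inE eqxx orbT.
move: HX HY; rewrite !inE !negb_or => /andP[XU XV] /andP[YU YV].
rewrite !between2 // in Ba Bb.
have nuv : (U : nat) <> V by move=> E; move/eqP: nUV; apply; exact: val_inj.
have xu : (X : nat) <> U by move=> E; move/eqP: XU; apply; exact: val_inj.
have xv : (X : nat) <> V by move=> E; move/eqP: XV; apply; exact: val_inj.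
have yu : (Y : nat) <> U by move=> E; move/eqP: YU; apply; exact: val_inj.
have yv : (Y : nat) <> V by move=> E; move/eqP: YV; apply; exact: val_inj.
move: Ha Hb Ba Bb; rewrite !inE => /orP[]/eqP -> /orP[]/eqP -> Ba Bb.
- by rewrite Ba in Bb.
- move: Ba Bb; rewrite /IL; case: (ltngtP U X); case: (ltngtP V X); case: (ltngtP U Y); case: (ltngtP V Y) => //=; lia.
- move: Ba Bb; rewrite /IL; case: (ltngtP U X); case: (ltngtP V X); case: (ltngtP U Y); case: (ltngtP V Y) => //=; lia.
- by rewrite Ba in Bb.
Qed.

Lemma path_edges_map p :
  path_edges (map toI p) = map (fun f => [set toI f.1; toI f.2]) (npairs p).
Proof. case: p => //= x q; elim: q x => //= y q IH x; by rewrite IH. Qed.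

Lemma shp_of (p : seq nat) : size p = n -> uniq p -> all (fun c => c < n) p ->
  (forall f g : nat * nat, f \in npairs p -> g \in npairs p -> ~ IL f.1 f.2 g.1 g.2) ->
  is_SHP (map toI p).
Proof.
move=> Hs Hu Hall Hnc.
have Hlt : forall c, c \in p -> c < n by move=> c; move/allP: Hall => H /H.
have Hneq : forall f : nat * nat, f \in npairs p -> toI f.1 != toI f.2.
  move=> f Hf; have [A1 A2] := npairs_mem Hf.
  apply/eqP => /(congr1 (@nat_of_ord n)); rewrite !val_toI ?Hlt //; exact: npairs_neq Hu Hf.
apply/and3P; split.
- by rewrite size_map Hs.
- rewrite map_inj_in_uniq // => c1 c2 H1 H2 /(congr1 (@nat_of_ord n)); rewrite !val_toI ?Hlt //.
- rewrite path_edges_map; apply/allP => e /mapP[f Hf ->]; apply/allP => g /mapP[g' Hg ->].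
  apply/negP => /(cross2 (Hneq _ Hf) (Hneq _ Hg)).
  have [A1 A2] := npairs_mem Hf; have [B1 B2] := npairs_mem Hg.
  by rewrite !val_toI ?Hlt //; apply: Hnc.
Qed.

Lemma dir2 (U V : 'I_n) : U != V -> dir [set U; V] = ((U : nat) + V) %% n.
Proof.
by move=> nUV; rewrite /dir big_setU1 ?inE //= big_set1.
Qed.

End Ord.

Lemma rot_eq n k c : c < n -> k < n -> (c + k) %% n = (if c + k < n then c + k else c + k - n).
Proof.
move=> Hc Hk; case: ifP => H; first by rewrite modn_small.
rewrite -[in LHS](subnK (_ : n <= c + k)) ?modnDr ?modn_small //; lia.
Qed.

Lemma I_rot n K u v x y : u < n -> v < n -> x < n -> y < n ->
  IL ((u + K) %% n) ((v + K) %% n) ((x + K) %% n) ((y + K) %% n) -> IL u v x y.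
Proof.
move=> Hu Hv Hx Hy.
have Hn : 0 < n by lia.
rewrite -!(modnDmr _ K); have Hk : K %% n < n by rewrite ltn_pmod.
move: (K %% n) Hk => k Hk.
rewrite !rot_eq //.
case: ifP => H1; case: ifP => H2; case: ifP => H3; case: ifP => H4; rewrite /IL; lia.
Qed.

Lemma modn_inj n K u w : u < n -> w < n -> (u + K) %% n = (w + K) %% n -> u = w.
Proof. by move=> Hu Hw /eqP; rewrite eqn_modDr !modn_small // => /eqP. Qed.

Definition rotn (n K c : nat) := (c + K) %% n.

Lemma core n (x0 : 'I_n) (B : {set {set 'I_n}}) (e : {set 'I_n}) (s L : nat) (eps : bool) :
  2 <= L <= n -> s < n -> blocks B ->
  e = [set toI x0 s; toI x0 ((s + L - 1) %% n)] ->
  (forall f, f \in B -> dir f = dir e -> f = e) ->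
  (forall j, j < L - 1 -> [set toI x0 ((s + j) %% n); toI x0 ((s + j).+1 %% n)] \notin B) ->
  (forall f, f \in B -> dir f <> (if eps then (dir e + 1) %% n else (dir e + (n - 1)) %% n)) ->
  False.
Proof.
move=> HL Hs Hbl He Huniq Hfree Hdir.
have Hn : 0 < n by lia.
have [p [a [Ha [Hsz Hu Hall Hnc Hed]]]] := @pre_exists n L eps HL.
have Hlt : forall c, c \in p -> c < n by move=> c; move/allP: Hall => H /H.
have [K HK] : exists K, K = s + n - a by exists (s + n - a).
have Hrot : forall c, rotn n K c < n by move=> c; rewrite ltn_pmod.
pose q := map (rotn n K) p.
have HSHP : is_SHP (map (toI x0) q).
  apply: shp_of.
  - by rewrite size_map.
  - rewrite map_inj_in_uniq // => c1 c2 /Hlt H1 /Hlt H2; exact: modn_inj.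
  - by apply/allP => c /mapP[c' _ ->].
  - rewrite npairs_map => f g /mapP[[u1 v1] Hf ->] /mapP[[u2 v2] Hg ->] /= HI.
    have [A1 A2] := npairs_mem Hf; have [B1 B2] := npairs_mem Hg.
    apply: (Hnc _ _ Hf Hg) => /=.
    exact: (I_rot (Hlt _ A1) (Hlt _ A2) (Hlt _ B1) (Hlt _ B2) HI).
have /hasP[g Hg gB] := Hbl _ HSHP.
move: Hg gB; rewrite path_edges_map npairs_map => /mapP[f' /mapP[[u v] Huv ->] ->] /= gB.
have [Au Av] := npairs_mem Huv.
have Hun := Hlt _ Au; have Hvn := Hlt _ Av.
have Huv' : u <> v := npairs_neq Hu Huv.
have Hdl : L - 1 < n by lia.
have rot_a : rotn n K a = s by rewrite /rotn (_ : a + K = s + n) ?modnDr ?modn_small //; lia.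
have rot_b : rotn n K (a + L - 1) = (s + L - 1) %% n.
  by rewrite /rotn (_ : a + L - 1 + K = s + L - 1 + n) ?modnDr //; lia.
have Hsn : toI x0 s != toI x0 ((s + L - 1) %% n).
  apply/eqP => /(congr1 (@nat_of_ord n)); rewrite !val_toI ?ltn_pmod // -{1}rot_a -rot_b.
  move/modn_inj; lia.
have Hdire : dir e = (s + (s + L - 1)) %% n.
  by rewrite He dir2 // !val_toI ?ltn_pmod // modnDmr.
have Huvn : toI x0 (rotn n K u) != toI x0 (rotn n K v).
  apply/eqP => /(congr1 (@nat_of_ord n)); rewrite !val_toI //.
  by move/modn_inj => /(_ Hun Hvn).
have Hdirg : dir [set toI x0 (rotn n K u); toI x0 (rotn n K v)] = (u + v + 2 * K) %% n.
  rewrite dir2 // !val_toI // /rotn modnDm; congr (_ %% _); clear -Hun; lia.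
case: (Hed _ Huv) => /= [[Hw [H1 H2]] | [Hz Hsum]].
-
  have [w [Hw' Hwr]] : exists w, ((u = w.+1 /\ v = w) \/ (u = w /\ v = w.+1)) /\
      a <= w /\ w.+1 <= a + L - 1.
    by case: Hw => Hw; [exists v | exists u]; clear -Hw H1 H2; lia.
  have Hj : w - a < L - 1 by clear -Hwr; lia.
  have Hrw : rotn n K w = (s + (w - a)) %% n.
    by rewrite /rotn (_ : w + K = s + (w - a) + n) ?modnDr //; rewrite HK; clear -Hwr Ha; lia.
  have Hrw1 : rotn n K w.+1 = (s + (w - a)).+1 %% n.
    by rewrite /rotn (_ : w.+1 + K = (s + (w - a)).+1 + n) ?modnDr //; rewrite HK; clear -Hwr Ha; lia.
  move: gB; case: Hw' => -[-> ->]; rewrite Hrw Hrw1; apply/negP.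
  + by rewrite setUC; apply: Hfree.
  + exact: Hfree.
- case: Hsum => Hsum.
  + have Hd : dir [set toI x0 (rotn n K u); toI x0 (rotn n K v)] = dir e.
      rewrite Hdirg Hdire (_ : u + v + 2 * K = 2 * n + (s + (s + L - 1))) ?modnMDl //; rewrite HK; clear -Hsum Ha HL; lia.
    have Eg := Huniq _ gB Hd.
    have Hu1 : toI x0 (rotn n K u) \in e by rewrite -Eg !inE eqxx.
    have Hv1 : toI x0 (rotn n K v) \in e by rewrite -Eg !inE eqxx orbT.
    move: Hu1 Hv1; rewrite He !inE -rot_b -rot_a.
    have toI_eq : forall c d, c < n -> d < n -> (toI x0 (rotn n K c) == toI x0 (rotn n K d)) -> c = d.
      move=> c d Hc Hd' /eqP/(congr1 (@nat_of_ord n)); rewrite !val_toI //.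
      by move/modn_inj; apply.
    have Ha0 : a < n by clear -Ha HL; lia.
    have Hb0 : a + L - 1 < n by clear -Ha HL; lia.
    case/orP => [/(toI_eq _ _ Hun Ha0) E1 | /(toI_eq _ _ Hun Hb0) E1];
    case/orP => [/(toI_eq _ _ Hvn Ha0) E2 | /(toI_eq _ _ Hvn Hb0) E2];
    clear -E1 E2 Hz HL; simpl in *; lia.
  + apply: (Hdir _ gB); rewrite Hdirg Hdire.
    case: eps Hsum {Hdir Hed} => Hsum.
    * rewrite modnDml (_ : u + v + 2 * K = 2 * n + (s + (s + L - 1) + 1)) ?modnMDl //; rewrite HK; clear -Hsum Ha HL; lia.
    * rewrite modnDml (_ : u + v + 2 * K = n + (s + (s + L - 1) + (n - 1))) ?modnDl //; rewrite HK; clear -Hsum Ha HL; lia.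
Qed.

Lemma odd_mod m i : 2 <= m -> i < m ->
  (2 * i + 1) %% (2 * m - 1) = (if i < m - 1 then 2 * i + 1 else 0).
Proof.
move=> Hm Hi; case: ifP => H; first by rewrite modn_small //; lia.
by rewrite (_ : 2 * i + 1 = 2 * m - 1) ?modnn //; lia.
Qed.

Lemma is_edge_ab2 n (U V : 'I_n) a b : (U : nat) = a -> (V : nat) = b ->
  is_edge_ab [set U; V] a b.
Proof.
move=> <- <-; apply/forallP => z; apply/eqP; rewrite !inE.
by [].
Qed.

Lemma toI_ord n (x0 z : 'I_n) : toI x0 z = z.
Proof. by apply: val_inj; rewrite /= val_toI. Qed.

Theorem proposition4 (m : nat) (B : {set {set 'I_(2*m-1)}})
  (alpha delta : nat) (e : {set 'I_(2*m-1)}) :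
  2 <= m ->
  is_blocker B ->
  (forall i, i < m ->
     exists! f, f \in B /\ dir f = (2 * i + 1) %% (2 * m - 1)) ->
  (forall f, f \in B -> exists i, i < m /\ dir f = (2 * i + 1) %% (2 * m - 1)) ->
  alpha < m ->
  (exists2 f, f \in B & is_edge_ab f alpha alpha.+1) ->
  (forall i, i < alpha -> forall f, f \in B -> ~~ is_edge_ab f i i.+1) ->
  delta < m ->
  (exists2 f, f \in B & is_edge_ab f (m - delta - 1) (m - delta)) ->
  (forall i, m - delta <= i < m -> forall f, f \in B -> ~~ is_edge_ab f i i.+1) ->
  e \in B ->
  (exists i, (i < alpha \/ m - delta <= i < m) /\
             dir e = (2 * i + 1) %% (2 * m - 1)) ->
  exists u v : 'I_(2*m-1),
    e = [set u; v] /\ alpha < u < m - delta /\ (m - delta < v \/ v < alpha).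
Proof.
move=> Hm [Hedge Hbl _] Huniq Hdirs Ham _ Hbefore Hdm [f2 f2B Hf2] Hafter eB [i0 [Hi0 Hde]].
have Hi0m : i0 < m by case: Hi0; lia.
have Had : alpha < m - delta.
  rewrite ltnNge; apply/negP => H.
  have := Hbefore (m - delta - 1) ltac:(lia) f2 f2B.
  by rewrite (_ : (m - delta - 1).+1 = m - delta) ?Hf2 //; lia.
have Hex : forall f, f \in B -> dir f = dir e -> f = e.
  move=> f fB Hf; case: (Huniq i0 Hi0m) => f0 [_ H0].
  have E1 := H0 f (conj fB (etrans Hf Hde)); have E2 := H0 e (conj eB Hde).
  by rewrite -E1 E2.
have bnd_free : forall (x0 : 'I_(2*m-1)) z, z < 2 * m - 1 -> (z < alpha \/ m - delta <= z) ->
    [set toI x0 z; toI x0 (z.+1 %% (2 * m - 1))] \notin B.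
  move=> x0 z Hz Hzc; apply/negP => fB.
  case: (ltnP z m) => Hzm.
  - have Hz1 : z.+1 %% (2 * m - 1) = z.+1 by rewrite modn_small //; lia.
    rewrite Hz1 in fB.
    have Hab : is_edge_ab [set toI x0 z; toI x0 z.+1] z z.+1.
      by apply: is_edge_ab2; rewrite val_toI //; lia.
    case: Hzc => Hzc.
    + by move: (Hbefore z Hzc _ fB); rewrite Hab.
    + by move: (Hafter z ltac:(lia) _ fB); rewrite Hab.
  - have [i [Hi Hdf]] := Hdirs _ fB.
    have Hneq : toI x0 z != toI x0 (z.+1 %% (2 * m - 1)).
      apply/eqP => /(congr1 (@nat_of_ord _)); rewrite !val_toI ?ltn_pmod //; last lia.
      case: (ltnP z.+1 (2 * m - 1)) => Hz1; first by rewrite modn_small //; lia.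
      by rewrite (_ : z.+1 = 2 * m - 1) ?modnn //; lia.
    rewrite dir2 // in Hdf.
    rewrite (val_toI x0 Hz) (val_toI x0 (_ : z.+1 %% (2 * m - 1) < 2 * m - 1)) in Hdf; last by rewrite ltn_pmod //; lia.
    rewrite odd_mod // in Hdf.
    case: (ltnP z.+1 (2 * m - 1)) => Hz1.
    + rewrite (modn_small Hz1) rot_eq // in Hdf.
      by move: Hdf; case: ifP; case: ifP; clear -Hzm Hz1 Hi Hm; lia.
    + rewrite (_ : z.+1 = 2 * m - 1) ?modnn ?addn0 ?modn_small // in Hdf; try lia.
      by move: Hdf; case: ifP; clear -Hzm Hz1 Hi Hm Hz; lia.
have /cards2P [x [y [nxy He]]] := Hedge e eB.
wlog lt_xy : x y nxy He / x < y.
  move=> Hw; case: (ltngtP x y) => [lt|gt|eq].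
  - exact: Hw lt.
  - by apply: (Hw y x); rewrite 1?eq_sym // He setUC.
  - by move/eqP: nxy; case; apply: val_inj.
have Hdire : dir e = (x + y) %% (2 * m - 1) by rewrite He dir2.
have Hxn := ltn_ord x; have Hyn := ltn_ord y.
have [HA|HnA] := boolP [&& alpha <= x & y <= m - delta].
  exfalso; move: Hde; rewrite Hdire odd_mod // rot_eq //.
  by case: ifP; case: ifP; clear -HA lt_xy Hi0 Hi0m Hm Had; lia.
have [HB1|HnB1] := boolP [&& alpha < x, x < m - delta & (m - delta < y) || (y < alpha)].
  by exists x, y; split => //; clear -HB1; lia.
have [HB2|HnB2] := boolP [&& alpha < y, y < m - delta & (m - delta < x) || (x < alpha)].
  by exists y, x; split; [rewrite He setUC | clear -HB2; lia].
exfalso.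
have [s [L [HL [Hs [Hse Hfr]]]]] : exists s L, 2 <= L <= 2 * m - 1 /\ s < 2 * m - 1 /\
    e = [set toI x s; toI x ((s + L - 1) %% (2 * m - 1))] /\
    (forall j, j < L - 1 -> (s + j) %% (2 * m - 1) < alpha \/ m - delta <= (s + j) %% (2 * m - 1)).
  case: (boolP ((y <= alpha) || (m - delta <= x))) => Hc.
  - exists x, (y - x + 1); split; first by clear -lt_xy Hyn; lia.
    split => //; split.
    + rewrite (_ : x + (y - x + 1) - 1 = y); last by clear -lt_xy; lia.
      by rewrite modn_small // !toI_ord.
    + move=> j Hj; rewrite modn_small; clear -Hj Hc lt_xy Hyn; lia.
  - exists y, (2 * m - 1 - y + x + 1); split; first by clear -lt_xy Hyn; lia.
    split => //; split.
    + rewrite (_ : y + (2 * m - 1 - y + x + 1) - 1 = x + (2 * m - 1)); last by clear -lt_xy Hyn; lia.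
      by rewrite modnDr modn_small // !toI_ord He setUC.
    + move=> j Hj; rewrite rot_eq //; last by clear -Hj Hyn lt_xy; lia.
      by case: ifP; clear -Hj Hc lt_xy Hyn HnA HnB1 HnB2 Had; lia.
apply: (@core (2 * m - 1) x B e s L (i0 < m - 1)) => //.
- move=> j Hj.
  have E : (s + j).+1 %% (2 * m - 1) = ((s + j) %% (2 * m - 1)).+1 %% (2 * m - 1).
    by rewrite -[(s + j).+1]addn1 -[((s + j) %% _).+1]addn1 modnDml.
  rewrite E; apply: bnd_free; first by rewrite ltn_pmod //; clear -Hm; lia.
  exact: Hfr.
- move=> f fB; have [i [Hi Hdf]] := Hdirs f fB.
  rewrite Hdf Hde !odd_mod //.
  case: (ltnP i0 (m - 1)) => Hi0' /=.
  + rewrite (modn_small (_ : 2 * i0 + 1 + 1 < 2 * m - 1)); last by clear -Hi0' Hm; lia.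
    by case: ifP; clear -Hi0' Hi Hm; lia.
  + rewrite add0n (modn_small (_ : 2 * m - 1 - 1 < 2 * m - 1)); last by clear -Hm; lia.
    by case: ifP; clear -Hi0' Hi Hm; lia.
Qed.
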